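(* Let $[x]_{ap}$ be a maximal ap-basic class (an ap-quasiattractor). Then for $z\in M$ we have $x<_{ap}z$ if and only if $z\in[x]_{ap}$. In particular, every ap-quasiattractor is compact.
   Context: Let $M\subset\mathbb{R}^d$ be closed. Let $F:M\to M$ be continuous with $\sup_{x\in M}\|F(x)\|<\infty$. Let $d(x,y)=\max_i|x_i-y_i|$. Suppose $M=M_0\cup M_1$ (disjoint) with $M_0$ closed, $F(M_0)\subseteq M_0$ and $F(M_1)\subseteq M_1$. ap-chain recurrence. For $\delta>0$, an ap $\delta$-pseudoorbit joining $x$ to $y$ is a tuple $(\xi_0,\dots,\xi_n)\in M^{n+1}$, $n\ge1$, with: - $\xi_0=x$ and $\xi_n=y$; - $\xi_i\in M_0\Rightarrow\xi_{i+1}\in M_0$; - $d(\xi_{i+1},F(\xi_i))<\delta$ for all $i$. Write $x<_{ap}y$ if for every $\delta>0$ such a pseudoorbit exists, and $x\sim_{ap}y$ if both $x<_{ap}y$ and $y<_{ap}x$. Let $\mathcal{R}_{ap}=\{x:x\sim_{ap}x\}$. The ap-basic classes are the equivalence classes $[x]_{ap}$ of $\sim_{ap}$ on $\mathcal{R}_{ap}$. Write $[x]_{ap}<_{ap}[y]_{ap}$ if $x<_{ap}y$. An ap-quasiattractor is a maximal ap-basic class, i.e. one such that $[x]_{ap}<_{ap}[y]_{ap}$ implies $[x]_{ap}=[y]_{ap}$. *)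

(* Defs.v *)
From Stdlib Require Import Reals Lra Lia List.
Open Scope R_scope.

(* A point of R^d is represented as a map  nat -> R  whose coordinates
   of index >= d vanish ("in_Rd d x"). *)
Definition point := nat -> R.

Definition in_Rd (d : nat) (x : point) : Prop :=
  forall i : nat, (d <= i)%nat -> x i = 0.

Fixpoint dist_max (d : nat) (x y : point) : R :=
  match d with
  | O => 0
  | S n => Rmax (dist_max n x y) (Rabs (x n - y n))
  end.

Definition zero_pt : point := fun _ => 0.

Definition closed_in_Rd (d : nat) (A : point -> Prop) : Prop :=
  (forall x, A x -> in_Rd d x) /\
  (forall x, in_Rd d x ->
     (forall eps, eps > 0 -> exists y, A y /\ dist_max d x y < eps) -> A x).

Definition open_in_Rd (d : nat) (U : point -> Prop) : Prop :=
  forall x, U x -> in_Rd d x /\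
    exists eps, eps > 0 /\
      forall y, in_Rd d y -> dist_max d x y < eps -> U y.

Definition compact_in_Rd (d : nat) (K : point -> Prop) : Prop :=
  (forall x, K x -> in_Rd d x) /\
  forall (I : Type) (U : I -> point -> Prop),
    (forall i, open_in_Rd d (U i)) ->
    (forall x, K x -> exists i, U i x) ->
    exists l : list I, forall x, K x -> exists i, In i l /\ U i x.

Section Ap.
Variables (d : nat) (M M0 : point -> Prop) (F : point -> point).

Definition ap_pseudoorbit (delta : R) (x y : point) : Prop :=
  exists (n : nat) (xi : nat -> point),
    (1 <= n)%nat /\ xi 0%nat = x /\ xi n = y /\
    (forall i, (i <= n)%nat -> M (xi i)) /\
    (forall i, (i < n)%nat -> M0 (xi i) -> M0 (xi (S i))) /\
    (forall i, (i < n)%nat -> dist_max d (xi (S i)) (F (xi i)) < delta).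

Definition ap_lt (x y : point) : Prop :=
  forall delta, delta > 0 -> ap_pseudoorbit delta x y.

Definition ap_equiv (x y : point) : Prop := ap_lt x y /\ ap_lt y x.

Definition ap_recurrent (x : point) : Prop := ap_equiv x x.

Definition ap_class (x : point) (z : point) : Prop :=
  ap_recurrent z /\ ap_equiv x z.

(* [x]_ap is an ap-quasiattractor: x in R_ap, and for every y in R_ap,
   [x]_ap <_ap [y]_ap (i.e. x <_ap y) implies [x]_ap = [y]_ap *)
Definition ap_quasiattractor (x : point) : Prop :=
  ap_recurrent x /\
  forall y, ap_recurrent y -> ap_lt x y ->
    forall z, ap_class x z <-> ap_class y z.

End Ap.

(* Main.v *)
Require Import Defs.
From Stdlib Require Import Reals Lra Lia List Classical.
Open Scope R_scope.

Lemma dm_nonneg d x y : 0 <= dist_max d x y.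
Proof. induction d; simpl. lra. apply Rle_trans with (1:=IHd), Rmax_l. Qed.

Lemma dm_sym d x y : dist_max d x y = dist_max d y x.
Proof. induction d; simpl; auto. rewrite IHd, Rabs_minus_sym; auto. Qed.

Lemma dm_self d x : dist_max d x x = 0.
Proof. induction d; simpl; auto. rewrite IHd, Rminus_diag, Rabs_R0, Rmax_left; lra. Qed.

Lemma dm_lt d x y e : 0 < e ->
  (dist_max d x y < e <-> forall i, (i < d)%nat -> Rabs (x i - y i) < e).
Proof.
  intros He; induction d; simpl.
  - split; intros; [lia|lra].
  - split.
    + intros H i Hi. apply Rmax_Rlt in H. destruct H as [H1 H2].
      destruct (Nat.eq_dec i d). subst; auto. apply IHd; auto; lia.
    + intros H. apply Rmax_lub_lt. apply IHd; intros; apply H; lia. apply H; lia.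
Qed.

Lemma dm_coord d x y i : (i < d)%nat -> Rabs (x i - y i) <= dist_max d x y.
Proof.
  induction d; simpl; intros. lia.
  destruct (Nat.eq_dec i d). subst; apply Rmax_r.
  apply Rle_trans with (2:=Rmax_l _ _). apply IHd; lia.
Qed.

Lemma dm_tri d x y z : dist_max d x z <= dist_max d x y + dist_max d y z.
Proof.
  induction d; simpl. lra.
  apply Rmax_lub.
  - apply Rle_trans with (1:=IHd). apply Rplus_le_compat; apply Rmax_l.
  - apply Rle_trans with (Rabs (x d - y d) + Rabs (y d - z d)).
    replace (x d - z d) with ((x d - y d) + (y d - z d)) by ring. apply Rabs_triang.
    apply Rplus_le_compat; apply Rmax_r.
Qed.

Lemma dm_ext d x y x' y' : (forall i, (i < d)%nat -> x i = x' i) ->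
  (forall i, (i < d)%nat -> y i = y' i) -> dist_max d x y = dist_max d x' y'.
Proof.
  induction d; simpl; intros; auto.
  rewrite IHd by (intros; auto). rewrite H, H0 by lia. auto.
Qed.

Definition cube d (Rb : R) (x : point) := in_Rd d x /\ forall i, (i < d)%nat -> Rabs (x i) <= Rb.

Lemma cover1D (Q : R -> R -> Prop) a b :
  (forall t, a <= t <= b -> exists e, e > 0 /\ Q t e) ->
  exists l : list (R*R), (forall p, In p l -> Q (fst p) (snd p)) /\
    (forall s, a <= s <= b -> exists p, In p l /\ Rabs (s - fst p) < snd p).
Proof.
  intros HQ.
  destruct (Rlt_le_dec b a) as [Hba|Hab].
  { exists nil. split. intros p []. intros s Hs; lra. }
  set (good := fun c => exists l : list (R*R), (forall p, In p l -> Q (fst p) (snd p)) /\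
    (forall s, a <= s <= c -> exists p, In p l /\ Rabs (s - fst p) < snd p)).
  set (E := fun c => a <= c <= b /\ good c).
  assert (Ea : E a).
  { split. lra. destruct (HQ a) as [e [He Hq]]. lra.
    exists ((a,e)::nil). split. intros p [<-|[]]; auto.
    intros s Hs. exists (a,e). split. left; auto. simpl.
    replace (s - a) with 0 by lra. rewrite Rabs_R0; auto. }
  destruct (completeness E) as [m [Hub Hlub]].
  { exists b. intros c Hc. apply Hc. }
  { exists a; auto. }
  assert (Ham : a <= m) by (apply Hub; auto).
  assert (Hmb : m <= b) by (apply Hlub; intros c Hc; apply Hc).
  destruct (HQ m) as [e [He Hq]]. lra.
  assert (Hc : exists c, E c /\ c > m - e).
  { apply NNPP; intro Hn. assert (m <= m - e); [|lra].
    apply Hlub. intros c Hc. apply Rnot_lt_le. intro Hlt. apply Hn. exists c; split; auto; lra. }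
  destruct Hc as [c [[Hc1 [l [Hl1 Hl2]]] Hcm]].
  assert (Hgood : forall c', c' <= m + e/2 -> good c').
  { intros c' Hc'. exists ((m,e)::l). split.
    intros p [<-|Hp]; auto.
    intros s Hs. destruct (Rle_dec s c).
    - destruct (Hl2 s) as [p [Hp1 Hp2]]. lra. exists p; split; auto. right; auto.
    - exists (m,e). split. left; auto. simpl. apply Rabs_def1; lra. }
  destruct (Rle_dec b (m + e/2)).
  - apply (Hgood b); auto.
  - assert (E (m + e/2)). split. lra. apply Hgood; lra.
    assert (m + e/2 <= m) by (apply Hub; auto). lra.
Qed.

Lemma Rabs_le_inv a b : Rabs a <= b -> -b <= a <= b.
Proof. intros H. pose proof (Rle_abs a). pose proof (Rle_abs (-a)). rewrite Rabs_Ropp in H1. lra. Qed.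
Lemma gather {A B : Type} (P : A -> list B -> Prop) (l : list A) :
  (forall p, In p l -> exists L, P p L) ->
  exists LL, forall p, In p l -> exists L, P p L /\ incl L LL.
Proof.
  induction l; intros H. exists nil; intros p [].
  destruct IHl as [LL HLL]. intros; apply H; right; auto.
  destruct (H a) as [L HL]. left; auto.
  exists (L ++ LL). intros p [<-|Hp].
  - exists L; split; auto. intros z Hz; apply in_or_app; auto.
  - destruct (HLL p Hp) as [L' [H1 H2]]. exists L'; split; auto.
    intros z Hz; apply in_or_app; right; auto.
Qed.

Lemma fold_min_pos {A} (f : A -> R) l : (forall p, In p l -> f p > 0) ->
  fold_right Rmin 1 (map f l) > 0 /\ forall p, In p l -> fold_right Rmin 1 (map f l) <= f p.
Proof.
  induction l; simpl; intros H. split. lra. intros p [].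
  destruct IHl as [H1 H2]. intros; apply H; auto.
  split. apply Rmin_glb_lt; auto. apply H; auto.
  intros p [<-|Hp]. apply Rmin_l. apply Rle_trans with (1:=Rmin_r _ _); auto.
Qed.

Lemma cube_compact d Rb : compact_in_Rd d (cube d Rb).
Proof.
  induction d.
  - split. intros x Hx; apply Hx.
    intros I U HU Hcov.
    destruct (Hcov zero_pt) as [i Hi]. split. intros j _; reflexivity. intros; lia.
    destruct (HU i zero_pt Hi) as [_ [e [He He2]]].
    exists (i::nil). intros x Hx. exists i. split. left; auto.
    apply He2. apply Hx. simpl; lra.
  - split. intros x Hx; apply Hx.
    intros I U HU Hcov.
    assert (Hloc : forall t0, -Rb <= t0 <= Rb -> exists eta, eta > 0 /\
       exists L : list I, forall y, cube (S d) Rb y -> Rabs (y d - t0) < eta ->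
          exists i, In i L /\ U i y).
    { intros t0 Ht0.
      set (W := fun (p : I * posreal) (x : point) => in_Rd d x /\ exists rho, rho > 0 /\
         forall y, in_Rd (S d) y -> dist_max d x y < rho -> Rabs (y d - t0) < pos (snd p) ->
           U (fst p) y).
      destruct IHd as [_ IH]. destruct (IH _ W) as [l Hl].
      - intros p x [Hx [rho [Hrho Hr]]]. split; auto. exists (rho/2). split. lra.
        intros x' Hx' Hd. split; auto. exists (rho/2). split. lra.
        intros y Hy Hd2 Ht. apply Hr; auto.
        pose proof (dm_tri d x x' y). lra.
      - intros x Hx.
        set (p := fun j => if Nat.eqb j d then t0 else x j).
        assert (Hp : cube (S d) Rb p).
        { split.
          - intros j Hj. unfold p. destruct (Nat.eqb_spec j d). lia. apply Hx; lia.
          - intros j Hj. unfold p. destruct (Nat.eqb_spec j d). apply Rabs_le; lra. apply Hx; lia. }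
        destruct (Hcov p Hp) as [i Hi].
        destruct (HU i p Hi) as [_ [e [He He2]]].
        exists (i, mkposreal e He). split. apply Hx. exists e. split; auto.
        intros y Hy Hd Ht. simpl in Ht. apply He2; auto. simpl.
        apply Rmax_lub_lt.
        + rewrite (dm_ext d p y x y); auto. intros j Hj; unfold p.
          destruct (Nat.eqb_spec j d); auto; lia.
        + unfold p. rewrite Nat.eqb_refl. rewrite Rabs_minus_sym; auto.
      - destruct (fold_min_pos (fun p : I * posreal => pos (snd p)) l) as [Hm1 Hm2].
        intros p _. apply cond_pos.
        exists (fold_right Rmin 1 (map (fun p : I * posreal => pos (snd p)) l)). split; auto.
        exists (map fst l). intros y Hy Ht.
        set (x := fun j => if Nat.ltb j d then y j else 0).
        assert (Hx : cube d Rb x).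
        { split. intros j Hj; unfold x. destruct (Nat.ltb_spec j d). lia. auto.
          intros j Hj; unfold x. destruct (Nat.ltb_spec j d). apply Hy; lia. lia. }
        destruct (Hl x Hx) as [p [Hpl [_ [rho [Hrho Hr]]]]].
        exists (fst p). split. apply in_map; auto.
        apply Hr. apply Hy.
        rewrite (dm_ext d x y y y). rewrite dm_self; auto.
        intros j Hj; unfold x; destruct (Nat.ltb_spec j d); auto; lia. auto.
        apply Rlt_le_trans with (1:=Ht). apply Hm2; auto. }
    destruct (cover1D (fun t0 eta => exists L : list I, forall y, cube (S d) Rb y ->
          Rabs (y d - t0) < eta -> exists i, In i L /\ U i y) (-Rb) Rb) as [l [Hl1 Hl2]].
    { intros t Ht. destruct (Hloc t Ht) as [e [He H]]. exists e; auto. }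
    destruct (gather (fun p L => forall y, cube (S d) Rb y ->
          Rabs (y d - fst p) < snd p -> exists i, In i L /\ U i y) l) as [LL HLL].
    { intros p Hp. apply Hl1; auto. }
    exists LL. intros y Hy.
    destruct (Hl2 (y d)) as [p [Hp1 Hp2]].
    { assert (Rabs (y d) <= Rb) by (apply Hy; lia). apply Rabs_le_inv; auto. }
    destruct (HLL p Hp1) as [L [HL1 HL2]].
    destruct (HL1 y Hy Hp2) as [i [Hi1 Hi2]]. exists i; split; auto.
Qed.

Lemma closed_sub_compact d K C : compact_in_Rd d C -> closed_in_Rd d K ->
  (forall x, K x -> C x) -> compact_in_Rd d K.
Proof.
  intros [HCr HC] [HKr HKc] Hsub. split; auto.
  intros I U HU Hcov.
  set (U' := fun (o : option I) y => match o with Some i => U i y | None => in_Rd d y /\ ~ K y end).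
  destruct (HC _ U') as [l Hl].
  - intros [i|] y Hy; simpl in Hy. apply HU; auto.
    destruct Hy as [Hy HnK]. split; auto.
    apply NNPP; intro Hn. apply HnK. apply HKc; auto. intros eps Heps.
    apply NNPP; intro Hn2. apply Hn. exists eps. split; auto.
    intros y' Hy' Hd. split; auto. intro Ky'. apply Hn2. exists y'; split; auto.
  - intros x Hx. destruct (classic (K x)).
    destruct (Hcov x H) as [i Hi]. exists (Some i); auto.
    exists None. simpl. split; auto.
  - exists (flat_map (fun o => match o with Some i => i :: nil | None => nil end) l).
    intros x Hx. destruct (Hl x (Hsub x Hx)) as [[i|] [Ho Hu]]; simpl in Hu.
    + exists i; split; auto. apply in_flat_map. exists (Some i); split; auto. left; auto.
    + destruct Hu; contradiction.
Qed.

Lemma cube_closed d Rb : closed_in_Rd d (cube d Rb).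
Proof.
  split. intros x Hx; apply Hx.
  intros x Hx Hc. split; auto. intros i Hi.
  apply Rnot_lt_le; intro Hlt.
  destruct (Hc (Rabs (x i) - Rb)) as [y [Hy Hd]]. lra.
  pose proof (dm_coord d x y i Hi). pose proof (proj2 Hy i Hi).
  pose proof (Rabs_triang (x i - y i) (y i)). replace (x i - y i + y i) with (x i) in H1 by ring.
  lra.
Qed.

Lemma max_list {A} (f : A -> nat) l : exists N, forall p, In p l -> (f p <= N)%nat.
Proof.
  induction l. exists O; intros p [].
  destruct IHl as [N HN]. exists (Nat.max N (f a)). intros p [<-|Hp]. lia.
  specialize (HN p Hp). lia.
Qed.

Definition is_omega d F (w y : point) := forall eps, eps > 0 -> forall N, exists n,
  (N <= n)%nat /\ dist_max d (Nat.iter n F w) y < eps.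

Lemma iter_M (M : point -> Prop) F (HFM : forall x, M x -> M (F x)) w n :
  M w -> M (Nat.iter n F w).
Proof. intros H; induction n; simpl; auto. Qed.

Lemma omega_exists d M F B (HMcl : closed_in_Rd d M) (HFM : forall x, M x -> M (F x))
  (HFbdd : forall x, M x -> dist_max d (F x) zero_pt <= B) w :
  M w -> exists y, M y /\ is_omega d F w y.
Proof.
  intros Hw.
  set (K := fun y => M y /\ cube d B y).
  assert (HK : compact_in_Rd d K).
  { apply (closed_sub_compact d K (cube d B)). apply cube_compact.
    split. intros x Hx; apply Hx.
    intros x Hx Hc. split.
    apply HMcl; auto. intros eps Heps. destruct (Hc eps Heps) as [y [Hy Hd]]. exists y; split; auto. apply Hy.
    apply cube_closed; auto. intros eps Heps. destruct (Hc eps Heps) as [y [Hy Hd]]. exists y; split; auto. apply Hy.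
    intros x Hx; apply Hx. }
  assert (HiK : forall n, K (Nat.iter (S n) F w)).
  { intros n. pose proof (iter_M M F HFM w n Hw) as Hm. split. apply HFM; auto.
    split. apply (proj1 HMcl). apply HFM; auto.
    intros i Hi. pose proof (dm_coord d (F (Nat.iter n F w)) zero_pt i Hi).
    pose proof (HFbdd _ Hm). change (zero_pt i) with 0 in H. rewrite Rminus_0_r in H. simpl. lra. }
  apply NNPP; intro Hn.
  destruct HK as [_ HK].
  set (U := fun (q : point * R * nat) p => let '(y, e, N) := q in
     in_Rd d p /\ dist_max d y p < e /\ K y /\ e > 0 /\
     forall n, (N <= n)%nat -> e <= dist_max d (Nat.iter n F w) y).
  destruct (HK _ U) as [l Hl].
  - intros [[y e] N] p [Hp [Hd Hr]]. split; auto. exists (e - dist_max d y p). split. lra.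
    intros p' Hp' Hd'. split; auto. split; auto. pose proof (dm_tri d y p p'). lra.
  - intros x Hx. apply NNPP; intro Hn2. apply Hn. exists x. split. apply Hx.
    intros eps Heps N. apply NNPP; intro Hn3. apply Hn2. exists (x, eps, N). simpl.
    split. apply (proj1 HMcl), Hx. rewrite dm_self. split; auto. split; auto. split; auto.
    intros n Hn4. apply Rnot_lt_le. intro Hlt. apply Hn3. exists n; split; auto.
  - destruct (max_list (fun q : point * R * nat => snd q) l) as [N HN].
    destruct (Hl _ (HiK N)) as [[[y e] N'] [Hq Hu]]. simpl in Hu.
    destruct Hu as [_ [Hd [_ [_ Hge]]]]. specialize (HN _ Hq). simpl in HN.
    specialize (Hge (S N) ltac:(lia)). rewrite dm_sym in Hge. simpl in Hge. lra.
Qed.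

Lemma po_trans d M M0 F delta a b c :
  ap_pseudoorbit d M M0 F delta a b -> ap_pseudoorbit d M M0 F delta b c ->
  ap_pseudoorbit d M M0 F delta a c.
Proof.
  intros [n [xi [Hn [H0 [Hn' [HM [HM0 HD]]]]]]] [m [et [Hm [G0 [Gm [GM [GM0 GD]]]]]]].
  set (z := fun k => if Nat.leb k n then xi k else et (k - n)%nat).
  assert (Z1 : forall k, (k <= n)%nat -> z k = xi k).
  { intros k Hk; unfold z. destruct (Nat.leb_spec k n); auto; lia. }
  assert (Z2 : forall k, (n <= k)%nat -> z k = et (k - n)%nat).
  { intros k Hk; unfold z. destruct (Nat.leb_spec k n); auto.
    assert (k = n) by lia. subst. rewrite Nat.sub_diag, G0; auto. }
  exists (n + m)%nat, z. split. lia. split. rewrite Z1; auto; lia.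
  split. rewrite Z2 by lia. replace (n + m - n)%nat with m by lia; auto.
  split. intros i Hi. destruct (Nat.le_gt_cases i n).
  rewrite Z1; auto. rewrite Z2 by lia. apply GM; lia.
  split; intros i Hi; destruct (Nat.le_gt_cases (S i) n).
  - rewrite !Z1 by lia. apply HM0; lia.
  - rewrite !Z2 by lia. replace (S i - n)%nat with (S (i - n)) by lia. apply GM0; lia.
  - rewrite !Z1 by lia. apply HD; lia.
  - rewrite !Z2 by lia. replace (S i - n)%nat with (S (i - n)) by lia. apply GD; lia.
Qed.

Lemma lt_trans d M M0 F a b c : ap_lt d M M0 F a b -> ap_lt d M M0 F b c -> ap_lt d M M0 F a c.
Proof. intros H1 H2 e He. eapply po_trans; eauto. Qed.

Lemma iter_M0 (M0 : point -> Prop) F (HFM0 : forall x, M0 x -> M0 (F x)) w k m :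
  M0 (Nat.iter k F w) -> (k <= m)%nat -> M0 (Nat.iter m F w).
Proof. intros H Hkm. induction Hkm; simpl; auto. Qed.

Lemma omega_M0 d M0 F (HM0cl : closed_in_Rd d M0) (HFM0 : forall x, M0 x -> M0 (F x)) w y k :
  in_Rd d y -> is_omega d F w y -> M0 (Nat.iter k F w) -> M0 y.
Proof.
  intros Hy Ho Hk. apply HM0cl; auto. intros eps Heps.
  destruct (Ho eps Heps k) as [n [Hn Hd]]. exists (Nat.iter n F w). split.
  eapply iter_M0; eauto. rewrite dm_sym; auto.
Qed.

Lemma reach d M M0 F (HMcl : closed_in_Rd d M) (HFM : forall x, M x -> M (F x))
  (HM0cl : closed_in_Rd d M0) (HFM0 : forall x, M0 x -> M0 (F x)) w y :
  M w -> M y -> is_omega d F w y -> ap_lt d M M0 F w y.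
Proof.
  intros Hw Hy Ho delta Hdelta.
  destruct (Ho delta Hdelta 1%nat) as [n [Hn Hd]].
  exists n, (fun k => if Nat.eqb k n then y else Nat.iter k F w).
  split; auto. split. destruct (Nat.eqb_spec 0 n); auto; lia.
  split. rewrite Nat.eqb_refl; auto.
  split. intros i Hi. destruct (Nat.eqb_spec i n); auto. apply iter_M; auto.
  split; intros i Hi.
  - destruct (Nat.eqb_spec i n). lia. destruct (Nat.eqb_spec (S i) n).
    + intros H. eapply omega_M0; eauto. apply HMcl; auto.
    + intros; simpl; auto.
  - destruct (Nat.eqb_spec i n). lia. destruct (Nat.eqb_spec (S i) n).
    + subst n. rewrite dm_sym; auto.
    + simpl. rewrite dm_self; auto.
Qed.

Lemma recur d M M0 M1 F (HMcl : closed_in_Rd d M) (HFM : forall x, M x -> M (F x))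
  (HFcont : forall x, M x -> forall eps, eps > 0 ->
      exists delta, delta > 0 /\
        forall y, M y -> dist_max d x y < delta ->
          dist_max d (F x) (F y) < eps)
  (Hdisj : forall x, ~ (M0 x /\ M1 x))
  (HM0cl : closed_in_Rd d M0) (HFM0 : forall x, M0 x -> M0 (F x)) w y :
  M w -> M y -> is_omega d F w y -> (M0 w \/ M1 y) -> ap_lt d M M0 F y y.
Proof.
  intros Hw Hy Ho Hc delta Hdelta.
  destruct (HFcont y Hy delta Hdelta) as [eta [Heta Hcont]].
  destruct (Ho eta Heta 1%nat) as [n [Hn Hd]].
  destruct (Ho delta Hdelta (n+2)%nat) as [m [Hm Hd2]].
  set (L := (m - n)%nat).
  exists L, (fun k => if Nat.eqb k 0 then y else if Nat.ltb k L then Nat.iter (n + k) F w else y).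
  split. unfold L; lia. split. auto.
  split. rewrite (proj2 (Nat.eqb_neq L 0)) by (unfold L; lia). rewrite Nat.ltb_irrefl; auto.
  split. intros i Hi. destruct (Nat.eqb i 0); auto. destruct (Nat.ltb i L); auto. apply iter_M; auto.
  split; intros i Hi.
  - simpl. destruct (Nat.eqb_spec i 0).
    + subst. destruct (Nat.ltb_spec 1 L); [|unfold L in *; lia].
      intros H0. destruct Hc as [Hc|Hc].
      apply (iter_M0 M0 F HFM0 w 0); simpl; auto; lia. exfalso; apply (Hdisj y); auto.
    + destruct (Nat.ltb_spec i L); [|lia]. destruct (Nat.ltb_spec (S i) L).
      * replace (n + S i)%nat with (S (n + i)) by lia. simpl; auto.
      * intros HH. eapply omega_M0; eauto. apply HMcl; auto.
  - simpl. destruct (Nat.eqb_spec i 0).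
    + subst. destruct (Nat.ltb_spec 1 L); [|unfold L in *; lia].
      replace (n + 1)%nat with (S n) by lia. simpl. rewrite dm_sym.
      apply Hcont. apply iter_M; auto. rewrite dm_sym; auto.
    + destruct (Nat.ltb_spec i L); [|lia]. destruct (Nat.ltb_spec (S i) L).
      * replace (n + S i)%nat with (S (n + i)) by lia. simpl. rewrite dm_self; auto.
      * assert (Hsm : S (n + i) = m) by (unfold L in *; lia).
        rewrite dm_sym. change (F (Nat.iter (n + i) F w)) with (Nat.iter (S (n + i)) F w).
        rewrite Hsm. auto.
Qed.

Lemma replace_last d M M0 F d1 d2 a b c :
  ap_pseudoorbit d M M0 F d1 a b -> dist_max d c b < d2 -> M c -> (M0 b -> M0 c) ->
  ap_pseudoorbit d M M0 F (d1 + d2) a c.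
Proof.
  intros [n [xi [Hn [H0 [Hn' [HM [HM0 HD]]]]]]] Hc HMc HMb.
  pose proof (dm_nonneg d c b).
  exists n, (fun k => if Nat.eqb k n then c else xi k).
  split; auto. split. destruct (Nat.eqb_spec 0 n); auto; lia.
  split. rewrite Nat.eqb_refl; auto.
  split. intros i Hi. destruct (Nat.eqb_spec i n); auto.
  split; intros i Hi; destruct (Nat.eqb_spec i n); try lia; destruct (Nat.eqb_spec (S i) n).
  - intros; apply HMb. rewrite <- Hn', <- e. apply HM0; auto.
  - apply HM0; auto.
  - pose proof (HD i Hi). rewrite e, Hn' in H1. pose proof (dm_tri d c b (F (xi i))). lra.
  - pose proof (HD i Hi). lra.
Qed.

Theorem mainTheorem5
  (d : nat) (M M0 M1 : point -> Prop) (F : point -> point)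
  (HMcl : closed_in_Rd d M)
  (HFM : forall x, M x -> M (F x))
  (HFcont : forall x, M x -> forall eps, eps > 0 ->
      exists delta, delta > 0 /\
        forall y, M y -> dist_max d x y < delta ->
          dist_max d (F x) (F y) < eps)
  (HFbdd : exists B, forall x, M x -> dist_max d (F x) zero_pt <= B)
  (HMsplit : forall x, M x <-> (M0 x \/ M1 x))
  (Hdisj : forall x, ~ (M0 x /\ M1 x))
  (HM0cl : closed_in_Rd d M0)
  (HFM0 : forall x, M0 x -> M0 (F x))
  (HFM1 : forall x, M1 x -> M1 (F x))
  (x : point)
  (Hx : ap_quasiattractor d M M0 F x) :
  (forall z, M z -> (ap_lt d M M0 F x z <-> ap_class d M M0 F x z)) /\
  compact_in_Rd d (ap_class d M M0 F x).
Proof.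
  destruct HFbdd as [B HB].
  assert (Hrec : forall z, M z -> exists y, ap_recurrent d M M0 F y /\ ap_lt d M M0 F z y).
  { intros z Hz.
    destruct (omega_exists d M F B HMcl HFM HB z Hz) as [y1 [Hy1 Ho1]].
    assert (Hz1 : ap_lt d M M0 F z y1) by (apply reach; auto).
    destruct (proj1 (HMsplit y1) Hy1) as [H0|H1].
    - destruct (omega_exists d M F B HMcl HFM HB y1 Hy1) as [y2 [Hy2 Ho2]].
      exists y2. split.
      + assert (ap_lt d M M0 F y2 y2) by (apply (recur d M M0 M1 F HMcl HFM HFcont Hdisj HM0cl HFM0 y1 y2); auto).
        split; auto.
      + eapply lt_trans; eauto. apply reach; auto.
    - exists y1. split; auto.
      assert (ap_lt d M M0 F y1 y1) by (apply (recur d M M0 M1 F HMcl HFM HFcont Hdisj HM0cl HFM0 z y1); auto).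
      split; auto. }
  assert (P1 : forall z, M z -> (ap_lt d M M0 F x z <-> ap_class d M M0 F x z)).
  { intros z Hz. split.
    - intros Hxz. destruct (Hrec z Hz) as [y [Hy Hzy]].
      assert (Hxy : ap_lt d M M0 F x y) by (eapply lt_trans; eauto).
      destruct Hx as [Hxr Hmax].
      assert (Hcy : ap_class d M M0 F x y).
      { apply (Hmax y Hy Hxy y). split; auto. }
      destruct Hcy as [_ [_ Hyx]].
      assert (Hzx : ap_lt d M M0 F z x) by (eapply lt_trans; eauto).
      split. split; eapply lt_trans; eauto. split; auto.
    - intros [_ [H _]]; auto. }
  split; auto.
  assert (HinM : forall z, ap_class d M M0 F x z -> M z).
  { intros z [[Hzz _] _]. destruct (Hzz 1 ltac:(lra)) as [n [xi [_ [H0 [_ [HM _]]]]]].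
    rewrite <- H0. apply HM; lia. }
  apply (closed_sub_compact d _ (cube d (B + 1))). apply cube_compact.
  - split. intros z Hz. apply HMcl, HinM; auto.
    intros z Hz Hc.
    assert (HMz : M z).
    { apply HMcl; auto. intros eps Heps. destruct (Hc eps Heps) as [y [Hy Hd]].
      exists y; split; auto. }
    apply P1; auto. intros delta Hdelta.
    assert (He0 : exists e0, e0 > 0 /\ (~ M0 z -> forall u, M0 u -> e0 <= dist_max d z u)).
    { destruct (classic (M0 z)) as [Hm|Hm].
      - exists 1. split. lra. intros; contradiction.
      - apply NNPP; intro Hn. apply Hm. apply HM0cl; auto. intros eps Heps.
        apply NNPP; intro Hn2. apply Hn. exists eps. split; auto. intros _ u Hu.
        apply Rnot_lt_le. intro Hlt. apply Hn2. exists u; split; auto. }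
    destruct He0 as [e0 [He0 He0']].
    destruct (Hc (Rmin (delta/2) e0)) as [z' [Hz' Hd]].
    { apply Rmin_glb_lt; lra. }
    pose proof (Rmin_l (delta/2) e0). pose proof (Rmin_r (delta/2) e0).
    destruct Hz' as [_ [Hxz' _]].
    replace delta with (delta/2 + delta/2) by field.
    apply (replace_last d M M0 F _ _ x z' z); auto. apply Hxz'; lra. lra.
    intros Hm0. destruct (classic (M0 z)) as [Hm|Hm]; auto.
    specialize (He0' Hm z' Hm0). lra.
  - intros z Hz. pose proof (HinM z Hz) as HMz.
    destruct Hz as [[Hzz _] _]. destruct (Hzz 1 ltac:(lra)) as [n [xi [Hn [H0 [Hn' [HM [_ HD]]]]]]].
    split. apply HMcl; auto.
    intros i Hi.
    assert (Hlt : (n - 1 < n)%nat) by lia.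
    pose proof (HD _ Hlt) as HD1. replace (S (n - 1)) with n in HD1 by lia. rewrite Hn' in HD1.
    assert (Hle : (n - 1 <= n)%nat) by lia. pose proof (HB (xi (n-1)%nat) (HM _ Hle)) as HB1.
    pose proof (dm_coord d z (F (xi (n-1)%nat)) i Hi).
    pose proof (dm_coord d (F (xi (n-1)%nat)) zero_pt i Hi).
    change (zero_pt i) with 0 in H1. rewrite Rminus_0_r in H1.
    pose proof (Rabs_triang (z i - F (xi (n - 1)%nat) i) (F (xi (n - 1)%nat) i)).
    replace (z i - F (xi (n - 1)%nat) i + F (xi (n - 1)%nat) i) with (z i) in H2 by ring.
    lra.
Qed.
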